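(* Let $d \ge 3$ and let $a,b$ be integers with $1 \le a \le b < a(d-1)$. For every integer $k$ with $1 \le k \le a$, there exist a finite simple graph $H$, a vertex $r$ of $H$, and an additional ''attachment edge'' $e$ incident to $r$ (whose other endpoint lies outside $H$), such that every vertex of $H$ has degree at most $d$ when $e$ is counted at $r$, and: (i) if $e$ is given label $2k$, then there is an assignment of nonnegative integer labels to the edges of $H$ such that every vertex of $H$ is valid and every vertex of $H$ is joined to $r$ by a path of edges of $H$ with positive labels; (ii) for every integer $x$ with $0 \le x < 2k$, if $e$ is given label $x$, then no assignment of nonnegative integer labels to the edges of $H$ has both properties in (i).
   Context: Given fixed $a \le b$ and labels on the edges of $H$ and on $e$, a vertex $v$ of $H$ is called valid if the sum of the labels of all edges incident to $v$ (including $e$ if $v=r$) is even and lies in the interval $[2a,2b]$. *)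

(* Defs.v *)
From mathcomp Require Import all_boot.
Set Implicit Arguments. Unset Strict Implicit. Unset Printing Implicit Defensive.

Definition simple_graph (V : finType) (adj : rel V) : Prop :=
  symmetric adj /\ irreflexive adj.

Definition deg (V : finType) (adj : rel V) (v : V) : nat := #|[set u | adj v u]|.

(* Edge labelings: the label of edge uv is lab [set u; v] (values on
   non-edges are irrelevant). *)
Definition labeling (V : finType) := {set V} -> nat.

(* Sum of labels at v, including the attachment edge e (label x) if v = r. *)
Definition label_sum (V : finType) (adj : rel V) (r : V) (x : nat)
  (lab : labeling V) (v : V) : nat :=
  \sum_(u | adj v u) lab [set v; u] + (if v == r then x else 0).

Definition valid (a b : nat) (V : finType) (adj : rel V) (r : V) (x : nat)
  (lab : labeling V) (v : V) : bool :=
  ~~ odd (label_sum adj r x lab v) &&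
  (2 * a <= label_sum adj r x lab v <= 2 * b).

Definition pos_rel (V : finType) (adj : rel V) (lab : labeling V) : rel V :=
  fun u w => adj u w && (0 < lab [set u; w]).

Definition good_labeling (a b : nat) (V : finType) (adj : rel V) (r : V)
  (x : nat) (lab : labeling V) : Prop :=
  (forall v, valid a b adj r x lab v) /\
  (forall v, connect (pos_rel adj lab) v r).

(* Main.v *)
Require Import Defs.
From mathcomp Require Import all_boot.
From mathcomp Require Import zify.
Unset Printing Implicit Defensive.

Lemma connect_map (T1 T2 : finType) (e1 : rel T1) (e2 : rel T2) (f : T1 -> T2) :
  (forall x y, e1 x y -> f x = f y \/ e2 (f x) (f y)) ->
  forall x y, connect e1 x y -> connect e2 (f x) (f y).
Proof.
move=> H x y /connectP [p pth ->] {y}.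
elim: p x pth => [|z p IH] x /=; first by rewrite connect0.
case/andP=> exz pz; apply: connect_trans (IH _ pz).
by case: (H _ _ exz) => [->|h]; [exact: connect0 | exact: connect1].
Qed.

Lemma connect_false (T : finType) (x y : T) : connect (fun _ _ => false) x y -> x = y.
Proof. by case/connectP => [[|z p]] //= _ ->. Qed.

Lemma inl_eq (T1 T2 : eqType) (x y : T1) : (@inl T1 T2 x == inl y) = (x == y).
Proof. by []. Qed.
Lemma inr_eq (T1 T2 : eqType) (x y : T2) : (@inr T1 T2 x == inr y) = (x == y).
Proof. by []. Qed.

Record gad := Gad { gV : finType; gadj : rel gV; groot : gV }.
Arguments gadj : clear implicits.
Arguments groot : clear implicits.

Section Gadgets.
Variables a b d : nat.

Definition good (G : gad) x lab := good_labeling a b (gadj G) (groot G) x lab.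
Definition validX (G : gad) (lab : labeling (gV G)) :=
  forall v, v != groot G -> valid a b (gadj G) (groot G) 0 lab v.
Definition connR (G : gad) (lab : labeling (gV G)) :=
  forall v, connect (pos_rel (gadj G) lab) v (groot G).
Definition sig (G : gad) (lab : labeling (gV G)) :=
  label_sum (gadj G) (groot G) 0 lab (groot G).
Definition nodeok (G : gad) n := simple_graph (gadj G) /\
  (forall v, v != groot G -> deg (gadj G) v <= d) /\ deg (gadj G) (groot G) = n.
Definition closedok (G : gad) := simple_graph (gadj G) /\
  (forall v, deg (gadj G) v + (v == groot G) <= d).

Lemma ls_x (V : finType) (adj : rel V) r x lab v :
  label_sum adj r x lab v = label_sum adj r 0 lab v + (if v == r then x else 0).
Proof. by rewrite /label_sum if_same addn0. Qed.

Lemma good_split G x lab : good G x lab <->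
  [/\ validX G lab, connR G lab &
      ~~ odd (sig G lab + x) && (2 * a <= sig G lab + x <= 2 * b)].
Proof.
rewrite /good /good_labeling /validX /connR /sig /valid.
split.
- case=> hv hc; split => //.
  + by move=> v /negbTE vr; move: (hv v); rewrite ls_x vr addn0.
  + by move: (hv (groot G)); rewrite ls_x eqxx.
- case=> hv hc hr; split => // v.
  case: (eqVneq v (groot G)) => [->|vr]; first by rewrite ls_x eqxx.
  by rewrite ls_x (negbTE vr) addn0; apply: hv.
Qed.


Definition sadj (G C : gad) : rel (gV G + gV C) := fun u v =>
  match u, v with
  | inl u, inl v => gadj G u v
  | inr u, inr v => gadj C u v
  | inl u, inr v => (u == groot G) && (v == groot C)
  | inr u, inl v => (u == groot C) && (v == groot G)
  end.
Definition addc (G C : gad) := Gad (gV G + gV C)%type (sadj G C) (inl (groot G)).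
Definition labL (G C : gad) (lab : labeling (gV G + gV C)%type) : labeling (gV G) :=
  fun S => lab (inl @: S).
Definition labR (G C : gad) (lab : labeling (gV G + gV C)%type) : labeling (gV C) :=
  fun S => lab (inr @: S).
Definition bridge (G C : gad) : {set (gV G + gV C)%type} :=
  [set inl (groot G); inr (groot C)].

Lemma ls_inl G C lab v :
  label_sum (sadj G C) (inl (groot G)) 0 lab (inl v) =
  label_sum (gadj G) (groot G) 0 (labL G C lab) v +
  (if v == groot G then lab (bridge G C) else 0).
Proof.
rewrite /label_sum !if_same !addn0 big_sumType; congr (_ + _).
  by apply: eq_bigr => u _; rewrite /labL imsetU1 imset_set1.
case: (eqVneq v (groot G)) => [->|ne].
  by rewrite (big_pred1 (groot C)) // => i; rewrite /sadj eqxx.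
by rewrite big_pred0 // => i; rewrite /sadj (negbTE ne).
Qed.

Lemma ls_inr G C lab w :
  label_sum (sadj G C) (inl (groot G)) 0 lab (inr w) =
  label_sum (gadj C) (groot C) 0 (labR G C lab) w +
  (if w == groot C then lab (bridge G C) else 0).
Proof.
rewrite /label_sum !if_same !addn0 big_sumType.
rewrite [X in X = _]addnC; congr (_ + _).
  by apply: eq_bigr => u _; rewrite /labR imsetU1 imset_set1.
case: (eqVneq w (groot C)) => [->|ne].
  by rewrite (big_pred1 (groot G)) /bridge 1?setUC // => i; rewrite /sadj eqxx.
by rewrite big_pred0 // => i; rewrite /sadj (negbTE ne).
Qed.

Lemma deg_inl G C v :
  deg (sadj G C) (inl v) = deg (gadj G) v + (v == groot G).
Proof.
rewrite /deg -!sum1dep_card big_sumType; congr (_ + _).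
case: (eqVneq v (groot G)) => [->|ne].
  by rewrite (big_pred1 (groot C)) ?eqxx // => i; rewrite /sadj eqxx.
by rewrite big_pred0 // => i; rewrite /sadj (negbTE ne).
Qed.

Lemma deg_inr G C w :
  deg (sadj G C) (inr w) = deg (gadj C) w + (w == groot C).
Proof.
rewrite /deg -!sum1dep_card big_sumType.
rewrite [X in X = _]addnC; congr (_ + _).
case: (eqVneq w (groot C)) => [->|ne].
  by rewrite (big_pred1 (groot G)) ?eqxx // => i; rewrite /sadj eqxx.
by rewrite big_pred0 // => i; rewrite /sadj (negbTE ne).
Qed.

Lemma sadj_simple G C : simple_graph (gadj G) -> simple_graph (gadj C) ->
  simple_graph (sadj G C).
Proof.
case=> sG iG [sC iC]; split.
  case=> u [v|v] /=; [exact: sG | exact: andbC | exact: andbC | exact: sC].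
by case=> u /=; [exact: iG | exact: iC].
Qed.


Lemma connect_nil (T : finType) (e : rel T) x y :
  (forall u v, e u v = false) -> connect e x y -> x = y.
Proof. by move=> h /connectP [[|z p]] //= /andP [] ; rewrite h. Qed.

Lemma pre_inl2 (T1 T2 : finType) (v u : T1) :
  (@inl T1 T2) @^-1: [set inl v; inl u] = [set v; u].
Proof. by apply/setP => x; rewrite !inE. Qed.
Lemma pre_inr2 (T1 T2 : finType) (v u : T2) :
  (@inr T1 T2) @^-1: [set inr v; inr u] = [set v; u].
Proof. by apply/setP => x; rewrite !inE. Qed.
Lemma pre_inlr2 (T1 T2 : finType) (v u : T2) :
  (@inl T1 T2) @^-1: [set inr v; inr u] = set0.
Proof. by apply/setP => x; rewrite !inE. Qed.

Lemma addc_restrict G C lab :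
  validX (addc G C) lab -> connR (addc G C) lab ->
  [/\ validX G (labL G C lab), connR G (labL G C lab),
      good C (lab (bridge G C)) (labR G C lab), 0 < lab (bridge G C) &
      sig (addc G C) lab = sig G (labL G C lab) + lab (bridge G C)].
Proof.
move=> hv hc; split.
- move=> v vr; have := hv (inl v) vr.
  by rewrite /valid /= !ls_inl (negbTE vr) addn0.
- move=> v.
  have := connect_map _ _ (pos_rel (sadj G C) lab) (pos_rel (gadj G) (labL G C lab))
    (fun u => match u with inl u => u | inr _ => groot G end) _ (inl v) (inl (groot G)) (hc (inl v)).
  apply => -[u|u] [u'|u']; rewrite /pos_rel /=.
  + by move=> h; right; rewrite /labL imsetU1 imset_set1.
  + by case/andP => /andP [/eqP -> _] _; left.
  + by case/andP => /andP [_ /eqP ->] _; left.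
  + by move=> _; left.
- split.
  + move=> w; have := hv (inr w) isT.
    by rewrite /valid /= !ls_inr (ls_x _ (gadj C) (groot C) (lab (bridge G C))).
  + move=> w.
    have := connect_map _ _ (pos_rel (sadj G C) lab) (pos_rel (gadj C) (labR G C lab))
      (fun u => match u with inr u => u | inl _ => groot C end) _ (inr w) (inl (groot G)) (hc (inr w)).
    apply => -[u|u] [u'|u']; rewrite /pos_rel /=.
    * by move=> _; left.
    * by case/andP => /andP [_ /eqP ->] _; left.
    * by case/andP => /andP [/eqP -> _] _; left.
    * by move=> h; right; rewrite /labR imsetU1 imset_set1.
- case: (posnP (lab (bridge G C))) => // y0.
  pose f := (fun u : (gV G + gV C)%type => if u is inl _ then true else false).
  have Hf : forall x y, pos_rel (sadj G C) lab x y -> f x = f y \/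
      (fun s t : bool => (s != t) && (0 < lab (bridge G C))) (f x) (f y).
    move=> -[u|u] [u'|u']; rewrite /pos_rel /=.
    * by move=> _; left.
    * by case/andP => /andP [/eqP -> /eqP ->] h; right.
    * case/andP => /andP [/eqP -> /eqP ->] h; right.
      by move: h; rewrite /bridge setUC.
    * by move=> _; left.
  have hcon := connect_map _ _ _ (fun s t : bool => (s != t) && (0 < lab (bridge G C))) f Hf _ _ (hc (inr (groot C))).
  suff: false = true by [].
  by apply: (connect_nil _ _ _ _ _ hcon) => u v; rewrite y0 andbF.
- by rewrite /sig /= ls_inl eqxx.
Qed.


Definition extlab (G C : gad) (labG : labeling (gV G)) (labC : labeling (gV C)) y :
  labeling (gV G + gV C)%type :=
  fun S => if S == bridge G C then y
           else if inl @^-1: S != set0 then labG (inl @^-1: S)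
           else labC (inr @^-1: S).

Lemma extlabL G C labG labC y v u :
  labL G C (extlab G C labG labC y) [set v; u] = labG [set v; u].
Proof.
rewrite /labL /extlab imsetU1 imset_set1.
have -> : ([set inl v; inl u] == bridge G C) = false.
  apply/negbTE/eqP => /setP /(_ (inr (groot C))).
  by rewrite /bridge !inE eqxx orbT.
rewrite pre_inl2.
by have -> : ([set v; u] != set0) by apply/set0Pn; exists v; rewrite !inE eqxx.
Qed.

Lemma extlabR G C labG labC y v u :
  labR G C (extlab G C labG labC y) [set v; u] = labC [set v; u].
Proof.
rewrite /labR /extlab imsetU1 imset_set1.
have -> : ([set inr v; inr u] == bridge G C) = false.
  apply/negbTE/eqP => /setP /(_ (inl (groot G))).
  by rewrite /bridge !inE eqxx.
by rewrite pre_inlr2 eqxx pre_inr2.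
Qed.

Lemma extlabB G C labG labC y : extlab G C labG labC y (bridge G C) = y.
Proof. by rewrite /extlab eqxx. Qed.

Lemma addc_extend G C labG labC y :
  validX G labG -> connR G labG -> good C y labC -> 0 < y ->
  exists lab, [/\ validX (addc G C) lab, connR (addc G C) lab &
                  sig (addc G C) lab = sig G labG + y].
Proof.
move=> hvG hcG [hvC hcC] y0.
have eL v : label_sum (gadj G) (groot G) 0 (labL G C (extlab G C labG labC y)) v =
            label_sum (gadj G) (groot G) 0 labG v.
  by rewrite /label_sum; congr (_ + _); apply: eq_bigr => u _; rewrite extlabL.
have eR w : label_sum (gadj C) (groot C) 0 (labR G C (extlab G C labG labC y)) w =
            label_sum (gadj C) (groot C) 0 labC w.
  by rewrite /label_sum; congr (_ + _); apply: eq_bigr => u _; rewrite extlabR.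
exists (extlab G C labG labC y); split.
- move=> [v|w] /= vr.
  + have vr' : v != groot G by [].
    by move: (hvG v vr'); rewrite /valid !ls_inl eL (negbTE vr') addn0.
  + move: (hvC w); rewrite /valid !ls_inr eR extlabB.
    by rewrite (ls_x _ (gadj C) (groot C) y).
- move=> [v|w] /=.
  + have := connect_map _ _ (pos_rel (gadj G) labG) (pos_rel (sadj G C) (extlab G C labG labC y)) inl _
      v (groot G) (hcG v).
    apply => u u' /=; right; move: H; rewrite /pos_rel /=.
    by rewrite -(extlabL G C labG labC y) /labL imsetU1 imset_set1.
  + apply: (@connect_trans _ _ (inr (groot C))).
      have := connect_map _ _ (pos_rel (gadj C) labC) (pos_rel (sadj G C) (extlab G C labG labC y)) inr _
        w (groot C) (hcC w).
      apply => u u' H; right; move: H; rewrite /pos_rel /=.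
      by rewrite -(extlabR G C labG labC y) /labR imsetU1 imset_set1.
    apply: connect1; rewrite /pos_rel /= !eqxx /=.
    by rewrite setUC -/(bridge G C) extlabB.
- by rewrite /sig /= ls_inl eL eqxx extlabB.
Qed.


Definition unitG := Gad unit (fun _ _ => false) tt.

Lemma unit_ls x lab v : label_sum (gadj unitG) (groot unitG) x lab v = x.
Proof. by case: v; rewrite /label_sum big_pred0. Qed.

Lemma unit_nodeok : nodeok unitG 0.
Proof.
split; first by split.
by split => [[]|]; rewrite ?eqxx // /deg -sum1dep_card big_pred0.
Qed.

Definition LState G n s := nodeok G n /\
  (forall lab, validX G lab -> connR G lab -> s <= sig G lab) /\
  exists lab, [/\ validX G lab, connR G lab & sig G lab = s].
Definition UState G n s := nodeok G n /\
  (forall lab, validX G lab -> connR G lab -> sig G lab <= s) /\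
  exists lab, [/\ validX G lab, connR G lab & sig G lab = s].
Definition LBc C c := closedok C /\
  (forall x lab, 0 < x -> good C x lab -> c <= x) /\ exists lab, good C c lab.
Definition UBc C c := closedok C /\
  (forall x lab, 0 < x -> good C x lab -> x <= c) /\ exists lab, good C c lab.

Lemma unit_conn lab : connR unitG lab.
Proof. by case. Qed.
Lemma unit_validX lab : validX unitG lab.
Proof. by case. Qed.
Lemma unit_sig lab : sig unitG lab = 0.
Proof. exact: unit_ls. Qed.

Lemma unit_LState : LState unitG 0 0.
Proof.
split; first exact: unit_nodeok.
split => //; exists (fun _ => 0); split; [exact: unit_validX|exact: unit_conn|exact: unit_sig].
Qed.
Lemma unit_UState : UState unitG 0 0.
Proof.
split; first exact: unit_nodeok.
split; first by move=> lab _ _; rewrite unit_sig.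
exists (fun _ => 0); split; [exact: unit_validX|exact: unit_conn|exact: unit_sig].
Qed.

Lemma addc_nodeok G C n : nodeok G n -> closedok C -> nodeok (addc G C) n.+1.
Proof.
case=> sG [dG rG] [sC dC]; split; first exact: sadj_simple.
split.
  move=> [v|w] /= vr.
    have vr' : v != groot G by [].
    by rewrite deg_inl (negbTE vr') addn0; apply: dG.
  by rewrite deg_inr; apply: dC.
by rewrite /= deg_inl eqxx rG addn1.
Qed.

Lemma addL G C n s c : LState G n s -> LBc C c -> 0 < c ->
  LState (addc G C) n.+1 (s + c).
Proof.
case=> nG [lG [labG [vG cG sgG]]] [okC [lC [labC gC]]] c0.
split; first exact: addc_nodeok.
split.
  move=> lab vl cl; case: (addc_restrict G C lab vl cl) => v1 c1 g1 p1 ->.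
  by apply: leq_add; [exact: lG v1 c1 | exact: lC _ _ p1 g1].
have [lab [v1 c1 s1]] := addc_extend G C labG labC c vG cG gC c0.
by exists lab; split => //; rewrite s1 sgG.
Qed.

Lemma addU G C n s c : UState G n s -> UBc C c -> 0 < c ->
  UState (addc G C) n.+1 (s + c).
Proof.
case=> nG [lG [labG [vG cG sgG]]] [okC [lC [labC gC]]] c0.
split; first exact: addc_nodeok.
split.
  move=> lab vl cl; case: (addc_restrict G C lab vl cl) => v1 c1 g1 p1 ->.
  by apply: leq_add; [exact: lG v1 c1 | exact: lC _ _ p1 g1].
have [lab [v1 c1 s1]] := addc_extend G C labG labC c vG cG gC c0.
by exists lab; split => //; rewrite s1 sgG.
Qed.

Lemma close_ok G n : nodeok G n -> n + 1 <= d -> closedok G.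
Proof.
case=> sG [dG rG] nd; split => // v.
case: (eqVneq v (groot G)) => [->|vr]; first by rewrite rG.
by rewrite addn0; apply: dG.
Qed.

Lemma closeU G n s t : LState G n s -> n + 1 <= d -> a <= b -> s + t = 2 * b ->
  UBc G t.
Proof.
case=> nG [lG [lab [vG cG sgG]]] nd ab st.
split; first exact: close_ok nG nd.
split.
  move=> x lab' _ /good_split [v1 c1 /andP [_ /andP [_ h]]].
  have := lG lab' v1 c1; lia.
exists lab; apply/good_split; split => //; rewrite sgG st.
by rewrite oddM /= leq_mul2l ab orbT leqnn.
Qed.

Lemma closeG G n s t : UState G n s -> n + 1 <= d -> a <= b -> s + t = 2 * a ->
  [/\ closedok G, (forall x lab, good G x lab -> t <= x) & exists lab, good G t lab].
Proof.
case=> nG [lG [lab [vG cG sgG]]] nd ab st.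
split; first exact: close_ok nG nd.
  move=> x lab' /good_split [v1 c1 /andP [_ /andP [h _]]].
  have := lG lab' v1 c1; lia.
exists lab; apply/good_split; split => //; rewrite sgG st.
by rewrite oddM /= leqnn leq_mul2l ab orbT.
Qed.

Lemma leaf_LBc : 1 <= d -> a <= b -> LBc unitG (2 * a).
Proof.
move=> d1 ab; split.
  split; first by split.
  by case; rewrite /deg -sum1dep_card big_pred0.
split.
  move=> x lab _ /good_split [_ _ /andP [_ /andP [h _]]].
  by move: h; rewrite unit_sig.
exists (fun _ => 0); apply/good_split; split; [exact: unit_validX|exact: unit_conn|].
by rewrite unit_sig oddM /= leqnn leq_mul2l ab orbT.
Qed.


Definition i0 : 'I_3 := ord0.
Definition i1 : 'I_3 := @Ordinal 3 1 isT.
Definition i2 : 'I_3 := @Ordinal 3 2 isT.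

Lemma sum3 (F : 'I_3 -> nat) (P : pred 'I_3) :
  \sum_(u | P u) F u =
  (if P i0 then F i0 else 0) + (if P i1 then F i1 else 0) + (if P i2 then F i2 else 0).
Proof.
rewrite big_mkcond !big_ord_recl big_ord0 /= addn0 addnA.
have -> : lift ord0 ord0 = i1 :> 'I_3 by apply: val_inj.
by have -> : lift ord0 (lift ord0 ord0) = i2 :> 'I_3 by apply: val_inj.
Qed.

Definition Dg := Gad 'I_3 (fun u v => u != v) i0.

Lemma D_ls lab x v : label_sum (gadj Dg) (groot Dg) x lab v =
  (if v == i0 then lab [set i0; i1] + lab [set i0; i2] + x else
   if v == i1 then lab [set i0; i1] + lab [set i1; i2] else
   lab [set i0; i2] + lab [set i1; i2]).
Proof.
rewrite /label_sum /= sum3.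
case: v => [[|[|[|?]]] p] //=.
- by rewrite (_ : Ordinal p = i0) ?add0n //; apply: val_inj.
- by rewrite (_ : Ordinal p = i1) ?addn0 1?setUC //; apply: val_inj.
- rewrite (_ : Ordinal p = i2) ?addn0; last by apply: val_inj.
  by rewrite setUC [[set i2; i1]]setUC.
Qed.


Lemma D_deg v : deg (gadj Dg) v = 2.
Proof.
rewrite /deg -sum1dep_card sum3 /=.
by case: v => [[|[|[|?]]] p].
Qed.

Lemma D_LBc : 3 <= d -> 2 <= a -> a <= b -> LBc Dg 2.
Proof.
move=> d3 a2 ab; split.
  split; first by split; [move=> u v /=; rewrite eq_sym | move=> u /=; rewrite eqxx].
  by move=> v; rewrite D_deg; case: (v == groot Dg); lia.
split.
  move=> x lab x0 [hv _].
  have := hv i0; have := hv i1; have := hv i2.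
  rewrite /valid !D_ls /=.
  move=> /andP [h2 _] /andP [h1 _] /andP [h0 _].
  have ox : ~~ odd x.
    move: h0 h1 h2; rewrite !oddD.
    by case: (odd (lab [set i0; i1])); case: (odd (lab [set i0; i2]));
       case: (odd (lab [set i1; i2])); case: (odd x).
  by clear -x0 ox; case: x x0 ox => [|[|x]].
pose lab : labeling 'I_3 := fun S => if i0 \in S then a.-1 else a.+1.
exists lab; split.
  move=> v; rewrite /valid D_ls /lab !inE /=.
  case: v => [[|[|[|?]]] p] //=.
  - have -> : a.-1 + a.-1 + 2 = 2 * a by lia.
    by rewrite oddM /= leqnn leq_mul2l ab orbT.
  - have -> : a.-1 + a.+1 = 2 * a by lia.
    by rewrite oddM /= leqnn leq_mul2l ab orbT.
  - have -> : a.-1 + a.+1 = 2 * a by lia.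
    by rewrite oddM /= leqnn leq_mul2l ab orbT.
move=> v; case: (eqVneq v i0) => [->|vn]; first exact: connect0.
apply: connect1; rewrite /pos_rel /= vn /lab !inE eqxx orbT /=.
lia.
Qed.


Definition Bk g := exists G, [/\ closedok G, (forall x lab, good G x lab -> 2 * g <= x)
  & exists lab, good G (2 * g) lab].
Definition ELS n s := exists G, LState G n s.

Lemma els_add n s c : ELS n s -> (exists C, LBc C c) -> 0 < c -> ELS n.+1 (s + c).
Proof. by case=> G hG [C hC] c0; exists (addc G C); apply: addL. Qed.

Lemma els_leaves J n s : 1 <= d -> 1 <= a -> a <= b -> ELS n s ->
  ELS (n + J) (s + 2 * a * J).
Proof.
move=> d1 a1 ab; elim: J n s => [|J IH] n s h; first by rewrite addn0 muln0 addn0.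
have h1 := els_add n s (2 * a) h (ex_intro _ unitG (leaf_LBc d1 ab)) ltac:(lia).
have := IH _ _ h1.
by rewrite addSnnS mulnS addnA.
Qed.

Lemma link g J del u g' : 3 <= d -> 2 <= a -> a <= b ->
  (g = 0 \/ (0 < g /\ Bk g)) -> del <= 1 -> (0 < g) + J + del + 1 <= d ->
  g + a * J + del + u = b -> 0 < u -> u + g' = a -> 0 < g' -> Bk g'.
Proof.
move=> d3 a2 ab hg dl deg_ok eb u0 ua g0.
have e0 : ELS (0 < g) (2 * g).
  case: hg => [->|[gp [C [okC lbC reC]]]]; first by exists unitG; exact: unit_LState.
  rewrite gp; have := els_add 0 0 (2 * g) (ex_intro _ unitG unit_LState) _ ltac:(lia).
  apply; exists C; split => //; split => // x lab _; exact: lbC.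
have e1 := els_leaves J _ _ ltac:(lia) ltac:(lia) ab e0.
have e2 : ELS ((0 < g) + J + del) (2 * g + 2 * a * J + 2 * del).
  case: del dl {deg_ok eb} => [|[|//]] _; first by rewrite !addn0.
  have := els_add _ _ 2 e1 (ex_intro _ Dg (D_LBc d3 a2 ab)) isT.
  by rewrite addn1.
case: e2 => W hW.
have hU := closeU W _ _ (2 * u) hW deg_ok ab ltac:(lia).
have hU2 := addU unitG W 0 0 (2 * u) unit_UState hU ltac:(lia).
have [okG lbG reG] := closeG _ _ _ (2 * g') hU2 ltac:(lia) ab ltac:(lia).
by exists (addc unitG W); split.
Qed.


Lemma leaf_Bk : 1 <= d -> a <= b -> Bk a.
Proof.
move=> d1 ab; have [ok [_ re]] := leaf_LBc d1 ab.
exists unitG; split => // x lab /good_split [_ _ /andP [_ /andP [h _]]].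
by move: h; rewrite unit_sig.
Qed.

Definition Pm r := r %% a = 0 \/ Bk (r %% a).

Lemma Pm_eq r r' : r %% a = r' %% a -> Pm r -> Pm r'.
Proof. by rewrite /Pm => ->. Qed.

Section Residues.
Hypotheses (d3 : 3 <= d) (a2 : 2 <= a) (ab : a <= b) (bad : b < a * (d - 1)).

Definition rho := b %% a.
Definition q := b %/ a.
Lemma bq : b = a * q + rho. Proof. by rewrite mulnC; exact: divn_eq. Qed.
Lemma rho_lt : rho < a. Proof. by rewrite /rho ltn_pmod //; lia. Qed.
Lemma q1 : 1 <= q.
Proof. by rewrite /q divn_gt0 //; lia. Qed.
Lemma qd : q <= d - 2.
Proof.
have : q < d - 1 by rewrite /q ltn_divLR; [rewrite mulnC | lia].
lia.
Qed.
Lemma aq1 : a * (q - 1) + a = a * q.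
Proof. by rewrite mulnBr muln1 subnK // leq_pmulr //; exact: q1. Qed.

Lemma hg_of r : Pm r -> r %% a = 0 \/ (0 < r %% a /\ Bk (r %% a)).
Proof.
case=> [->|h]; first by left.
by case: (posnP (r %% a)) => [->|p]; [left | right].
Qed.

Lemma M0 r : Pm r -> Pm (r + (a - rho)).
Proof.
move=> /hg_of hg; rewrite /Pm -modnDml.
have glt : r %% a < a by rewrite ltn_pmod //; lia.
have F1 := bq; have F2 := aq1; have rl := rho_lt; have Q1 := q1; have QD := qd.
move: hg glt; move: (r %% a) => g hg glt.
have bg : ((0 < g) : nat) <= 1 by case: (0 < g).
have hg' : g = 0 \/ 0 < g /\ Bk g by [].
case: (ltngtP g rho) => hr.
- rewrite (modn_small (_ : g + (a - rho) < a)); last lia.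
  right; apply: (link g q 0 (rho - g)) => //; lia.
- rewrite (_ : g + (a - rho) = g - rho + a); last lia.
  rewrite modnDr modn_small; last lia.
  right; apply: (link g (q - 1) 0 (a + rho - g)) => //; lia.
- by left; rewrite hr subnKC ?modnn //; lia.
Qed.

Lemma M1 r : Pm r -> r %% a = 0 \/ rho - 1 <= r %% a -> Pm (r + (a + 1 - rho)).
Proof.
move=> /hg_of hg side; rewrite /Pm -modnDml.
have glt : r %% a < a by rewrite ltn_pmod //; lia.
have F1 := bq; have F2 := aq1; have rl := rho_lt; have Q1 := q1; have QD := qd.
move: hg glt side; move: (r %% a) => g hg glt side.
have bg : ((0 < g) : nat) <= 1 by case: (0 < g).
case: (leqP rho g) => hr.
- rewrite (_ : g + (a + 1 - rho) = g + 1 - rho + a); last lia.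
  rewrite modnDr.
  case: (eqVneq (g + 1 - rho) a) => [->|ne]; first by left; rewrite modnn.
  rewrite modn_small; last lia.
  right; apply: (link g (q - 1) 1 (a + rho - g - 1)) => //; lia.
- case: (eqVneq g (rho - 1)) => [->|ne].
    by left; rewrite (_ : rho - 1 + (a + 1 - rho) = a) ?modnn //; lia.
  have g0 : g = 0 by case: side; lia.
  subst g.
  rewrite modn_small; last lia.
  right; apply: (link 0 q 1 (rho - 1)) => //; try lia; by left.
Qed.

Lemma M0n n r : Pm r -> Pm (r + n * (a - rho)).
Proof.
elim: n r => [|n IH] r h; first by rewrite mul0n addn0.
by rewrite mulSn addnA; apply: IH; apply: M0.
Qed.

Lemma Mrho r : Pm r -> Pm (r + rho).
Proof.
move=> h; apply: (Pm_eq (r + (a - 1) * (a - rho))); last exact: M0n.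
have rl := rho_lt.
have -> : (a - 1) * (a - rho) = a * (a - rho - 1) + rho.
  rewrite mulnBl mul1n [a * (a - rho - 1)]mulnBr muln1.
  have : a <= a * (a - rho) by rewrite leq_pmulr //; lia.
  move: (a * (a - rho)) => X; lia.
by rewrite addnA [r + _]addnC -addnA mulnC modnMDl.
Qed.

Lemma Qstep t : t < a -> Pm t -> Pm t.+1.
Proof.
have rl := rho_lt.
elim/ltn_ind: t => t IH ta h.
have tm : t %% a = t by rewrite modn_small.
case: (boolP ((t == 0) || (rho - 1 <= t))) => hc.
  have side : t %% a = 0 \/ rho - 1 <= t %% a.
    by rewrite tm; case/orP: hc => [/eqP ->|]; [left|right].
  have h2 := Mrho _ (M1 _ h side).
  apply: (Pm_eq _ _ _ h2).
  by rewrite (_ : t + (a + 1 - rho) + rho = t.+1 + a) ?modnDr //; lia.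
have hr := Mrho _ h.
case: (ltnP (t + rho) a) => hl.
  have side : (t + rho) %% a = 0 \/ rho - 1 <= (t + rho) %% a.
    by rewrite modn_small //; right; lia.
  have h2 := M1 _ hr side.
  apply: (Pm_eq _ _ _ h2).
  by rewrite (_ : t + rho + (a + 1 - rho) = t.+1 + a) ?modnDr //; lia.
have e : (t + rho) %% a = (t + rho - a) %% a.
  by rewrite -{1}(subnK hl) modnDr.
have hs := Pm_eq _ _ e hr.
have := M0 _ (IH (t + rho - a) ltac:(lia) ltac:(lia) hs).
by rewrite (_ : (t + rho - a).+1 + (a - rho) = t.+1) //; lia.
Qed.

Lemma Pm_all r : r < a -> Pm r.
Proof.
elim: r => [|r IH] ra; first by left; rewrite mod0n.
by apply: Qstep; [lia | apply: IH; lia].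
Qed.

End Residues.
End Gadgets.

Theorem lemma3p6 (d a b : nat) :
  3 <= d -> 1 <= a -> a <= b -> b < a * (d - 1) ->
  forall k : nat, 1 <= k <= a ->
  exists (V : finType) (adj : rel V) (r : V),
    [/\ simple_graph adj,
        (forall v : V, deg adj v + (v == r) <= d),
        (exists lab : labeling V, good_labeling a b adj r (2 * k) lab) &
        (forall x : nat, x < 2 * k ->
           ~ exists lab : labeling V, good_labeling a b adj r x lab)].
Proof.
move=> d3 a1 ab bad k /andP [k1 ka].
have [G [[sG dG] lb [lab gl]]] : Bk a b d k.
  case: (ltngtP k a) => hk.
  - have a2 : 2 <= a by lia.
    case: (Pm_all a b d d3 a2 ab bad k hk); rewrite modn_small //; lia.
  - lia.
  - by rewrite hk; apply: leaf_Bk; lia.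
exists (gV G), (gadj G), (groot G); split => //.
- by exists lab.
- by move=> x xk [lab' gl']; have := lb x lab' gl'; lia.
Qed.
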